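(* Let $n\ge 3$ and let $A=(a_{ij})\in\mathbb{R}^{n\times n}$ be symmetric (indefinite), and suppose $PAP^T=LTL^T$ where $P$ is a permutation matrix, $L=(l_{ij})$ is unit lower triangular with first column $e_1$ and $|l_{ij}|\le 1$ for all $i,j$, and $T=(t_{ij})$ is symmetric tridiagonal (as produced by Aasen's algorithm). Then the growth factor satisfies $$\rho:=\frac{\max_{i,j}|t_{ij}|}{\max_{i,j}|a_{ij}|}\le 2^{n-1}.$$ Moreover, if $n\ge 6$, then this bound is not attained: $|t_{nn}|<2^{n-1}\max_{i,j}|a_{ij}|$, and hence $\rho<2^{n-1}$.
   Context: $e_1$ denotes the first column of the $n\times n$ identity matrix. The growth factor of the factorization is the ratio of the largest absolute entry of $T$ to the largest absolute entry of $A$. It is assumed $A\neq 0$. *)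

(* Defs.v *)
From HB Require Import structures.
From mathcomp Require Import all_boot all_order all_algebra all_fingroup.
Set Implicit Arguments. Unset Strict Implicit. Unset Printing Implicit Defensive.
Import Order.TTheory GRing.Theory Num.Theory.
Local Open Scope ring_scope.

(* max_{i,j} |m_ij| (entries' absolute values are >= 0, so 0 is a neutral start) *)
Definition maxabs (R : realFieldType) (n : nat) (M : 'M[R]_n) : R :=
  \big[Num.max/0]_(i < n) \big[Num.max/0]_(j < n) `|M i j|.

Definition unit_lower (R : realFieldType) (n : nat) (L : 'M[R]_n) : Prop :=
  (forall i : 'I_n, L i i = 1) /\ (forall i j : 'I_n, (i < j)%N -> L i j = 0).

Definition first_col_e1 (R : realFieldType) (n : nat) (L : 'M[R]_n) : Prop :=
  forall (i j : 'I_n), val j = 0%N -> L i j = (if val i == 0%N then 1 else 0).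

Definition sym_tridiag (R : realFieldType) (n : nat) (T : 'M[R]_n) : Prop :=
  T^T = T /\ (forall i j : 'I_n, (i.+1 < j)%N -> T i j = 0).

Definition growth (R : realFieldType) (n : nat) (A T : 'M[R]_n) : R :=
  maxabs T / maxabs A.

(* Main.v *)
Require Import Defs.
From HB Require Import structures.
From mathcomp Require Import all_boot all_order all_algebra all_fingroup.
From mathcomp Require Import ring lra zify.
Set Implicit Arguments. Unset Strict Implicit. Unset Printing Implicit Defensive.
Import Order.TTheory GRing.Theory Num.Theory.
Local Open Scope ring_scope.

Record hyps (R : realFieldType) (N : nat) (a : R) (b l h : nat -> nat -> R) : Prop := Hyps {
  hb : forall i j, (i <= N)%N -> (j <= N)%N -> `|b i j| <= a;
  hsym : forall i j, (i <= N)%N -> (j <= N)%N -> b i j = b j i;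
  hdiag : forall i, (i <= N)%N -> l i i = 1;
  hl0 : forall i, (0 < i)%N -> (i <= N)%N -> l i 0%N = 0;
  hlabs : forall i m, (i <= N)%N -> (m <= N)%N -> `|l i m| <= 1;
  hhess : forall m j, (j.+1 < m)%N -> (m <= N)%N -> (j <= N)%N -> h m j = 0;
  hB : forall i j, (i <= N)%N -> (j <= N)%N ->
        b i j = \sum_(0 <= m < i.+1) l i m * h m j }.

Lemma geom (R : realFieldType) k :
  \sum_(1 <= m < k.+1) (2:R) ^+ m.-1 = 2 ^+ k - 1.
Proof.
elim: k => [|k IH]; first by rewrite big_geq // expr0 subrr.
by rewrite big_nat_recr //= IH exprS; ring.
Qed.

Section S.
Variables (R : realFieldType) (N : nat) (a : R) (b l h : nat -> nat -> R).
Hypothesis H : hyps N a b l h.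

Lemma rec_eq k j : (0 < k)%N -> (k <= N)%N -> (j <= N)%N ->
  h k j = b k j - \sum_(1 <= m < k) l k m * h m j.
Proof.
move=> k0 kN jN; rewrite (hB H) // big_nat_recr //= (hdiag H) // mul1r.
by rewrite (big_ltn k0) (hl0 H) // mul0r add0r addrAC subrr add0r.
Qed.

Lemma h0 j : (j <= N)%N -> h 0%N j = b 0%N j.
Proof. by move=> jN; rewrite (hB H) // big_nat1 (hdiag H) // mul1r. Qed.

Lemma hbound k j : (0 < k)%N -> (k <= N)%N -> (j <= N)%N ->
  `|h k j| <= 2 ^+ k.-1 * a.
Proof.
move=> + + jN; elim/ltn_ind: k => k IH k0 kN.
rewrite rec_eq //.
have S1 : `|\sum_(1 <= m < k) l k m * h m j| <= \sum_(1 <= m < k) 2 ^+ m.-1 * a.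
  apply: le_trans (ler_norm_sum _ _ _) _.
  rewrite big_nat_cond [X in _ <= X]big_nat_cond.
  apply: ler_sum => m /andP[/andP[m1 mk] _].
  rewrite normrM; apply: le_trans (IH m mk m1 (ltnW (leq_trans mk kN))).
  by rewrite ler_piMl // (hlabs H) // ltnW // (leq_trans mk kN).
have S2 : \sum_(1 <= m < k) (2:R) ^+ m.-1 * a = (2 ^+ k.-1 - 1) * a.
  by rewrite -mulr_suml; case: k k0 {IH kN S1} => // k _; rewrite geom.
have := hb H kN jN; have := ler_normB (b k j) (\sum_(1 <= m < k) l k m * h m j).
rewrite S2 in S1; lra.
Qed.


Lemma sum_nonneg0 (F : nat -> R) lo hi : (forall m, (lo <= m < hi)%N -> 0 <= F m) ->
  \sum_(lo <= m < hi) F m = 0 -> forall m, (lo <= m < hi)%N -> F m = 0.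
Proof.
move=> F0 /eqP; rewrite big_nat_cond psumr_eq0; last by move=> i /andP[/F0].
move=> /allP Hall m Hm; have := Hall m; rewrite mem_index_iota Hm andbT => /(_ isT) /implyP /(_ isT) /eqP; done.
Qed.

Lemma cascade k j : (0 < k)%N -> (k <= N)%N -> (j <= N)%N ->
  2 ^+ k.-1 * a <= `|h k j| ->
  [/\ (forall m, (0 < m)%N -> (m < k)%N -> `|h m j| = 2 ^+ m.-1 * a),
      (forall m, (0 < m)%N -> (m < k)%N -> - l k m * h m j * h k j = `|h m j| * `|h k j|) &
      b k j * h k j = a * `|h k j|].
Proof.
move=> k0 kN jN Hge.
have mN m : (m < k)%N -> (m <= N)%N by move=> mk; exact: ltnW (leq_trans mk kN).
set S := \sum_(1 <= m < k) l k m * h m j.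
set SA := \sum_(1 <= m < k) `|l k m * h m j|.
set SH := \sum_(1 <= m < k) `|h m j|.
set SP := \sum_(1 <= m < k) 2 ^+ m.-1 * a.
have eSP : SP = (2 ^+ k.-1 - 1) * a.
  by rewrite /SP -mulr_suml; have := geom R k.-1; rewrite prednK // => ->.
have ep : h k j = b k j - S by rewrite rec_eq.
have i1 : `|h k j| <= `|b k j| + SA.
  by rewrite ep; apply: le_trans (ler_normB _ _) _; rewrite lerD2l ler_norm_sum.
have D2 : forall m, (1 <= m < k)%N -> 0 <= `|h m j| - `|l k m * h m j|.
  move=> m /andP[m1 mk]; rewrite subr_ge0 normrM ler_piMl //.
  by rewrite (hlabs H) // mN.
have D3 : forall m, (1 <= m < k)%N -> 0 <= 2 ^+ m.-1 * a - `|h m j|.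
  by move=> m /andP[m1 mk]; rewrite subr_ge0 hbound // mN.
have eD2 : \sum_(1 <= m < k) (`|h m j| - `|l k m * h m j|) = SH - SA by rewrite sumrB.
have eD3 : \sum_(1 <= m < k) (2 ^+ m.-1 * a - `|h m j|) = SP - SH by rewrite sumrB.
have pD2 : 0 <= SH - SA by rewrite -eD2 big_nat_cond sumr_ge0 // => m /andP[/D2].
have pD3 : 0 <= SP - SH by rewrite -eD3 big_nat_cond sumr_ge0 // => m /andP[/D3].
have bA := hb H kN jN.
have z2 : SH - SA = 0 by lra.
have z3 : SP - SH = 0 by lra.
have eb : `|b k j| = a by lra.
have eq1 : `|h k j| = `|b k j| + SA by lra.
rewrite -eD2 in z2; rewrite -eD3 in z3.
have F2 := sum_nonneg0 D2 z2; have F3 := sum_nonneg0 D3 z3.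
set p := h k j.
have D4 : forall m, (1 <= m < k)%N -> 0 <= `|l k m * h m j| * `|p| + l k m * h m j * p.
  move=> m _; rewrite -normrM; have := ler_norm (- (l k m * h m j * p)); rewrite normrN; lra.
have D5 : 0 <= `|b k j| * `|p| - b k j * p.
  rewrite -normrM; have := ler_norm (b k j * p); lra.
have eD4 : \sum_(1 <= m < k) (`|l k m * h m j| * `|p| + l k m * h m j * p) = SA * `|p| + S * p.
  by rewrite big_split /= -!mulr_suml.
have sq : `|p| * `|p| = p * p by rewrite -!expr2 real_normK // num_real.
have pD4 : 0 <= SA * `|p| + S * p by rewrite -eD4 big_nat_cond sumr_ge0 // => m /andP[/D4].
have e : (`|b k j| * `|p| - b k j * p) + (SA * `|p| + S * p) = 0.
  have -> : S = b k j - p by rewrite /p ep; ring.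
  transitivity ((`|b k j| + SA) * `|p| - p * p); first ring.
  by rewrite -eq1 sq subrr.
have z4 : SA * `|p| + S * p = 0 by lra.
have z5 : `|b k j| * `|p| - b k j * p = 0 by lra.
rewrite -eD4 in z4; have F4 := sum_nonneg0 D4 z4.
split.
- move=> m m0 mk; have := F3 m; rewrite m0 mk => /(_ isT); lra.
- move=> m m0 mk; have := F4 m; have := F2 m; rewrite m0 mk => /(_ isT) e2 /(_ isT).
  have : `|l k m * h m j| = `|h m j| by lra.
  move=> ->; lra.
- rewrite -eb; lra.
Qed.

Lemma rowsum (sg : nat -> R) i c :
  (forall m, (0 < m)%N -> (m < i)%N -> l i m = - (sg i * sg m)) ->
  (0 < i)%N -> (i <= N)%N -> (c.+2 <= i)%N ->
  b i c = - sg i * \sum_(1 <= m < c.+2) sg m * h m c.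
Proof.
move=> LL i0 iN ci; have cN : (c <= N)%N by lia.
rewrite (hB H) // (@big_cat_nat _ _ _ c.+2) //=; last by lia.
have Z : \sum_(c.+2 <= m < i.+1) l i m * h m c = 0.
  rewrite big_nat_cond big1 // => m /andP[/andP[cm mi] _]; rewrite (hhess H) ?mulr0 //; lia.
rewrite Z addr0.
rewrite (@big_ltn _ _ _ 0%N) // (hl0 H) // mul0r add0r mulr_sumr.
apply: eq_big_nat => m /andP[m1 mc]; rewrite LL //; last by lia.
ring.
Qed.

Lemma diagsum (sg : nat -> R) k c :
  (forall m, (0 < m)%N -> (m < k)%N -> l k m = - (sg k * sg m)) ->
  (0 < k)%N -> (k <= N)%N -> (c <= N)%N ->
  b k c = h k c + - sg k * \sum_(1 <= m < k) sg m * h m c.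
Proof.
move=> LL k0 kN cN.
have E : \sum_(1 <= m < k) l k m * h m c = - sg k * \sum_(1 <= m < k) sg m * h m c.
  rewrite mulr_sumr; apply: eq_big_nat => m /andP[m1 mk]; rewrite LL //; ring.
rewrite (rec_eq k0 kN cN) E; ring.
Qed.

Lemma alg1 (l0 sm sk x y : R) : x != 0 -> y != 0 -> sm * sm = 1 -> sk * sk = 1 ->
  - l0 * (sm * x) * (sk * y) = x * y -> l0 = - (sk * sm).
Proof.
move=> x0 y0 ssm ssk E.
have E1 : - l0 * sm * sk = 1.
  apply: (mulIf (mulf_neq0 x0 y0)); rewrite mul1r -[RHS]E /=; ring.
transitivity (l0 * (sm * sm) * (sk * sk)); first by rewrite ssm ssk !mulr1.
transitivity (- (- l0 * sm * sk) * (sk * sm)); first ring.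
by rewrite E1; ring.
Qed.

Lemma alg2 (b0 s x a0 : R) : x != 0 -> s * s = 1 -> b0 * (s * x) = a0 * x -> b0 = s * a0.
Proof.
move=> x0 ss E.
have E1 : b0 * s = a0 by apply: (mulIf x0); rewrite -E; ring.
by rewrite -E1 mulrA [s * b0]mulrC -mulrA ss mulr1.
Qed.

Lemma alg3 (s x y : R) : s * s = 1 -> - s * x = y -> x = - s * y.
Proof. by move=> ss <-; transitivity ((s*s)*x); [rewrite ss mul1r | ring]. Qed.

Lemma strict : 0 < a -> (5 <= N)%N -> `|h N N| < 2 ^+ N.-1 * a.
Proof.
move=> a0 N5; rewrite ltNge; apply/negP => Hge.
have NN : (N <= N)%N := leqnn N.
have N0 : (0 < N)%N by lia.
have [Fh _ _] := cascade N0 NN NN Hge.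
have eqh k : (0 < k)%N -> (k <= N)%N -> `|h k N| = 2 ^+ k.-1 * a.
  move=> k0 kN; case: (ltngtP k N) => [kl|kg|->]; [exact: Fh| lia |].
  by apply/eqP; rewrite eq_le Hge hbound.
have hpos k : (0 < k)%N -> (k <= N)%N -> `|h k N| != 0.
  by move=> k0 kN; rewrite eqh // mulf_neq0 ?expf_neq0 // gt_eqF.
pose sg m := Num.sg (h m N).
have sgsq k : (0 < k)%N -> (k <= N)%N -> sg k * sg k = 1.
  by move=> k0 kN; rewrite -expr2 sqr_sg -normr_eq0 (negbTE (hpos k k0 kN)).
have sgp k : h k N = sg k * `|h k N| by exact: numEsg.
have geh k : (0 < k)%N -> (k <= N)%N -> 2 ^+ k.-1 * a <= `|h k N|.
  by move=> k0 kN; rewrite eqh.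
have LL k m : (0 < m)%N -> (m < k)%N -> (k <= N)%N -> l k m = - (sg k * sg m).
  move=> m0 mk kN; have k0 : (0 < k)%N by lia.
  have [_ F2 _] := cascade k0 kN NN (geh k k0 kN).
  apply: (alg1 (x := `|h m N|) (y := `|h k N|)); rewrite ?hpos ?sgsq //; try lia.
  by rewrite -sgp -sgp F2.
have BN k : (0 < k)%N -> (k <= N)%N -> b k N = sg k * a.
  move=> k0 kN; have [_ _ F3] := cascade k0 kN NN (geh k k0 kN).
  apply: (alg2 (x := `|h k N|)); rewrite ?hpos ?sgsq //.
  by rewrite -sgp.
pose c := N.-2.
have cN : c.+2 = N by rewrite /c; lia.
have c0 : (0 < c)%N by rewrite /c; lia.
pose M := c.-2.
have eM : c = M.+2 by rewrite /M; lia.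
have M0 : (0 < M)%N by rewrite /M; lia.
pose tau := sg c * sg N.
have tt : tau * tau = 1.
  transitivity ((sg c * sg c) * (sg N * sg N)); first by rewrite /tau; ring.
  by rewrite !sgsq //; [rewrite mulr1 | lia].
pose G k := \sum_(1 <= m < k.+1) sg m * h m c.
pose beta k := sg k * b k c.
have Grec k : (k.+1 <= N)%N -> G k.+1 = 2 * G k + beta k.+1.
  move=> kN.
  have e1 : G k.+1 = G k + sg k.+1 * h k.+1 c by rewrite /G big_nat_recr.
  have e2 : b k.+1 c = h k.+1 c + - sg k.+1 * G k.
    by rewrite /G; apply: diagsum => //; [move=> m m0 mk; apply: LL | lia].
  have ss := sgsq k.+1 (ltn0Sn _) kN.
  rewrite e1 /beta e2.
  rewrite [RHS](_ : _ = 2 * G k + sg k.+1 * h k.+1 c - (sg k.+1 * sg k.+1) * G k); last by ring.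
  rewrite ss; ring.
have betav k : (0 < k)%N -> (k.+2 <= c)%N -> beta k = tau * a.
  move=> k0 kc.
  have Q1 := @rowsum sg c k (fun m m0 mc => LL c m m0 mc (leq_trans (leqnSn _) (leq_trans (leqnSn _) (eq_leq cN)))) c0 ltac:(lia) kc.
  have Q2 := @rowsum sg N k (fun m m0 mc => LL N m m0 mc NN) N0 NN ltac:(lia).
  rewrite (hsym H) in Q2; try lia.
  rewrite BN in Q2; try lia.
  have Q3 := alg3 (sgsq N N0 NN) (esym Q2).
  rewrite /beta (hsym H); try lia.
  rewrite Q1 Q3.
  transitivity ((sg k * sg k) * (sg c * sg N * a)); first by ring.
  by rewrite sgsq; [rewrite mul1r | | lia].
have Gval k : (k <= M)%N -> G k = tau * a * (2 ^+ k - 1).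
  elim: k => [_|k IH kM]; first by rewrite /G big_geq // expr0 subrr mulr0.
  rewrite Grec; last by lia.
  rewrite IH; last by lia.
  rewrite betav //; last by lia.
  rewrite exprS; ring.
have bb k : (0 < k)%N -> (k <= N)%N -> - a <= tau * beta k <= a.
  move=> k0 kN; rewrite -ler_norml /tau /beta !normrM.
  have s1 x : `|Num.sg x| <= 1 :> R by rewrite normr_sg; case: (x != 0).
  have := hb H kN (ltac:(lia) : (c <= N)%N).
  have := s1 (h c N); have := s1 (h N N); have := s1 (h k N).
  rewrite /sg => e1 e2 e3 e4.
  apply: le_trans (_ : 1 * 1 * (1 * `|b k c|) <= a); last by rewrite !mul1r.
  apply: ler_pM; rewrite ?mulr_ge0 //; first by apply: ler_pM.
  by apply: ler_pM.
have GN : G c.+1 = - (tau * a).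
  have Q := @rowsum sg N c (fun m m0 mc => LL N m m0 mc NN) N0 NN ltac:(lia).
  rewrite (hsym H) in Q; try lia.
  rewrite BN in Q; try lia.
  have := alg3 (sgsq N N0 NN) (esym Q).
  by rewrite /G => ->; rewrite /tau; ring.
rewrite eM in GN.
rewrite Grec in GN; last by lia.
rewrite Grec in GN; last by lia.
rewrite Grec in GN; last by lia.
rewrite Gval // in GN.
set X := (2:R) ^+ M in GN.
have X2 : 2 <= X.
  have h1 : (1:R) <= 2 ^+ M.-1 by apply: exprn_ege1; lra.
  by rewrite /X -(prednK M0) exprS; lra.
have aX : 2 * a <= a * X by rewrite mulrC ler_pM2l.
have b1 := bb M.+1 (ltn0Sn _) ltac:(lia).
have b2 := bb M.+2 (ltn0Sn _) ltac:(lia).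
have b3 := bb M.+3 (ltn0Sn _) ltac:(lia).
have L1 : tau * (- (tau * a)) = - a.
  by transitivity (- (tau * tau) * a); [ring | rewrite tt; ring].
have R1 : tau * (2 * (2 * (2 * (tau * a * (X - 1)) + beta M.+1) + beta M.+2) + beta M.+3)
   = 8 * (a * X - a) + 4 * (tau * beta M.+1) + 2 * (tau * beta M.+2) + tau * beta M.+3.
  by transitivity (8 * (tau * tau) * (a * X - a) + 4 * (tau * beta M.+1) + 2 * (tau * beta M.+2) + tau * beta M.+3); [ring | rewrite tt; ring].
rewrite GN in R1.
lra.
Qed.

End S.

Lemma sum_window (R : realFieldType) (F : nat -> R) n lo hi : (lo <= hi)%N -> (hi <= n)%N ->
  (forall q, (q < lo)%N -> F q = 0) -> (forall q, (hi <= q < n)%N -> F q = 0) ->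
  \sum_(0 <= q < n) F q = \sum_(lo <= q < hi) F q.
Proof.
move=> lh hn F1 F2.
have lon : (lo <= n)%N by lia.
rewrite (@big_cat_nat _ _ _ lo 0 n _ _ (leq0n lo) lon) /=.
rewrite (@big_cat_nat _ _ _ hi lo n _ _ lh hn) /=.
have Z1 : \sum_(0 <= q < lo) F q = 0.
  by rewrite big_nat_cond big1 // => q /andP[/andP[_ ql] _]; apply: F1.
have Z2 : \sum_(hi <= q < n) F q = 0.
  by rewrite big_nat_cond big1 // => q /andP[qh _]; apply: F2.
by rewrite Z1 Z2 add0r addr0.
Qed.

Record thyps (R : realFieldType) (N : nat) (l h t : nat -> nat -> R) : Prop := THyps {
  tsym : forall i j, (i <= N)%N -> (j <= N)%N -> t i j = t j i;
  ttri : forall i j, (i <= N)%N -> (j <= N)%N -> (i.+1 < j)%N -> t i j = 0;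
  lup : forall i m, (i <= N)%N -> (m <= N)%N -> (i < m)%N -> l i m = 0;
  ldg : forall i, (i <= N)%N -> l i i = 1;
  hT : forall i j, (i <= N)%N -> (j <= N)%N -> h i j = \sum_(0 <= q < N.+1) t i q * l j q }.

Section TS.
Variables (R : realFieldType) (N : nat) (l h t : nat -> nat -> R).
Hypothesis TH : thyps N l h t.

Lemma thess m j : (j.+1 < m)%N -> (m <= N)%N -> (j <= N)%N -> h m j = 0.
Proof.
move=> jm mN jN; rewrite (hT TH) // big_nat_cond big1 // => q /andP[/andP[_ qN] _].
case: (ltnP j q) => jq; first by rewrite (lup TH) ?mulr0 //; lia.
rewrite (tsym TH) ?(ttri TH) ?mul0r //; lia.
Qed.

Lemma hsub i : (0 < i)%N -> (i <= N)%N -> h i i.-1 = t i i.-1.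
Proof.
case: i => // i _ iN /=; rewrite (hT TH) //; last by lia.
rewrite (@sum_window _ _ _ i i.+1); try lia.
- by rewrite big_nat1 (ldg TH) ?mulr1 //; lia.
- by move=> q qi; rewrite (tsym TH) ?(ttri TH) ?mul0r //; lia.
- by move=> q /andP[iq qN]; rewrite (lup TH) ?mulr0 //; lia.
Qed.

Lemma hdg i : (0 < i)%N -> (i <= N)%N -> h i i = t i i.-1 * l i i.-1 + t i i.
Proof.
case: i => // i _ iN /=; rewrite (hT TH) //.
rewrite (@sum_window _ _ _ i i.+2); try lia.
- rewrite big_ltn // big_nat1 (ldg TH) ?mulr1 //; lia.
- by move=> q qi; rewrite (tsym TH) ?(ttri TH) ?mul0r //; lia.
- by move=> q /andP[iq qN]; rewrite (lup TH) ?mulr0 //; lia.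
Qed.

Lemma h00 : h 0%N 0%N = t 0%N 0%N.
Proof.
rewrite (hT TH) // (@sum_window _ _ _ 0 1) //; try lia.
- by rewrite big_nat1 (ldg TH) ?mulr1.
- by move=> q /andP[iq qN]; rewrite (lup TH) ?mulr0 //; lia.
Qed.

End TS.

Lemma powle (R : realFieldType) (a : R) k m : 0 <= a -> (k <= m)%N -> 2 ^+ k * a <= 2 ^+ m * a.
Proof. by move=> a0 km; apply: ler_wpM2r => //; rewrite ler_eXn2l // ltr1n. Qed.

Lemma tbound (R : realFieldType) N (a : R) b l h t : hyps N a b l h -> thyps N l h t -> (0 < N)%N ->
  forall i j, (i <= N)%N -> (j <= N)%N -> ~~ ((i == N) && (j == N)) ->
  `|t i j| <= 2 ^+ N.-1 * a.
Proof.
move=> H TH N0.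
have a0 : 0 <= a by apply: le_trans (hb H (leq0n N) (leq0n N)).
have off i : (0 < i)%N -> (i <= N)%N -> `|t i i.-1| <= 2 ^+ N.-1 * a.
  move=> i0 iN; rewrite -(hsub TH) //; apply: le_trans (hbound H i0 iN _) _; first lia.
  by apply: powle => //; lia.
move=> i j iN jN nNN.
case: (ltngtP i j) => [ij|ji|e0]; last (rewrite -e0 andbb in nNN; rewrite -e0).
- case: (ltnP i.+1 j) => [ij2|ij2].
  + by rewrite (ttri TH) // normr0 mulr_ge0 // exprn_ge0.
  + have e : j = i.+1 by lia.
    rewrite (tsym TH) // e; have := off i.+1 (ltn0Sn _); apply; lia.
- case: (ltnP j.+1 i) => [ij2|ij2].
  + by rewrite (tsym TH) // (ttri TH) // normr0 mulr_ge0 // exprn_ge0.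
  + have e : i = j.+1 by lia.
    by rewrite e; apply: off => //; lia.
- clear e0 jN; case: i iN nNN => [_ _ | i iN nNN].
  + by rewrite -(h00 TH) (h0 H) // (le_trans (hb H _ _)) // -{1}(mul1r a) ler_wpM2r // exprn_ege1 // ler1n.
  + have iN' : (i.+1 < N)%N by rewrite ltn_neqAle iN andbT; apply: contra nNN => /eqP e; rewrite -e eqxx.
    have e := hdg TH (ltn0Sn i) iN; rewrite /= in e.
    have e2 := hsub TH (ltn0Sn i) iN; rewrite /= in e2.
    have -> : t i.+1 i.+1 = h i.+1 i.+1 - h i.+1 i * l i.+1 i by rewrite e e2; ring.
    apply: le_trans (ler_normB _ _) _; rewrite normrM.
    have b1 := hbound H (ltn0Sn i) iN (ltnW iN).
    have b2 := hbound H (ltn0Sn i) iN iN.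
    have l1 := hlabs H iN (ltnW iN).
    have h1 : `|h i.+1 i| * `|l i.+1 i| <= `|h i.+1 i| by rewrite ler_piMr.
    have : 2 ^+ i.+1 * a <= 2 ^+ N.-1 * a by apply: powle => //; lia.
    rewrite exprS /= in b1 b2 *; lra.
Qed.

Lemma tNN (R : realFieldType) N (a : R) b l h t : hyps N a b l h -> thyps N l h t -> (0 < N)%N ->
  `|t N N| <= `|h N N| + `|h N N.-1|.
Proof.
move=> H TH N0.
have e := hdg TH N0 (leqnn N); have e2 := hsub TH N0 (leqnn N).
have -> : t N N = h N N - h N N.-1 * l N N.-1 by rewrite e e2; ring.
apply: le_trans (ler_normB _ _) _; rewrite normrM lerD2l ler_piMr //.
by apply: (hlabs H); lia.
Qed.

Lemma le_bigmax0 (R : realFieldType) (I : eqType) (r : seq I) (F : I -> R) x :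
  x \in r -> F x <= \big[Num.max/0]_(i <- r) F i.
Proof.
elim: r => // y r IH; rewrite inE big_cons => /orP[/eqP -> | xr]; rewrite le_max.
  by rewrite lexx.
by rewrite IH ?orbT.
Qed.

Lemma maxabs_ge (R : realFieldType) n (M : 'M[R]_n) i j : `|M i j| <= maxabs M.
Proof.
rewrite /maxabs.
apply: le_trans (le_bigmax0 (fun i => \big[Num.max/0]_(j < n) `|M i j|) (mem_index_enum i)).
exact: (le_bigmax0 (fun j => `|M i j|) (mem_index_enum j)).
Qed.

Lemma maxabs_le (R : realFieldType) n (M : 'M[R]_n) c :
  0 <= c -> (forall i j, `|M i j| <= c) -> maxabs M <= c.
Proof.
move=> c0 Hc; rewrite /maxabs; elim/big_ind: _ => // [x y hx hy|i _].
  by rewrite ge_max hx hy.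
elim/big_ind: _ => //.
by move=> x y hx hy; rewrite ge_max hx hy.
Qed.

Lemma maxabs_lt (R : realFieldType) n (M : 'M[R]_n) c :
  0 < c -> (forall i j, `|M i j| < c) -> maxabs M < c.
Proof.
move=> c0 Hc; rewrite /maxabs; elim/big_ind: _ => // [x y hx hy|i _].
  by rewrite gt_max hx hy.
elim/big_ind: _ => //.
by move=> x y hx hy; rewrite gt_max hx hy.
Qed.

Theorem theorem1 (R : realFieldType) (n : nat) (A L T : 'M[R]_n) (s : 'S_n) :
  (3 <= n)%N ->
  A^T = A ->
  A != 0 ->
  perm_mx s *m A *m (perm_mx s)^T = L *m T *m L^T ->
  unit_lower L ->
  first_col_e1 L ->
  (forall i j : 'I_n, `|L i j| <= 1) ->
  sym_tridiag T ->
  growth A T <= 2 ^+ n.-1 /\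
  ((6 <= n)%N ->
     (forall i : 'I_n, val i = n.-1 -> `|T i i| < 2 ^+ n.-1 * maxabs A) /\
     growth A T < 2 ^+ n.-1).
Proof.
case: n A L T s => [|N] A L T s n3; first by [].
move=> Asym A0 Hf [Ld Lu] L1 Lab [Tsym Ttri].
have N2 : (2 <= N)%N by [].
set B := perm_mx s *m A *m (perm_mx s)^T in Hf.
have Bent i j : B i j = A (s i) (s j).
  by rewrite /B tr_perm_mx -col_permE -row_permE !mxE.
set a := maxabs A.
have apos : 0 < a.
  case: (boolP [exists i, [exists j, A i j != 0]]) => [/existsP[i /existsP[j Aij]]|/existsPn Hn].
  - by apply: lt_le_trans (maxabs_ge A i j); rewrite normr_gt0.
  - exfalso; move/negP: A0; apply; apply/eqP/matrixP => i j; rewrite mxE.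
    by move/existsPn: (Hn i) => /(_ j); rewrite negbK => /eqP.
pose Hm := T *m L^T.
have HB : B = L *m Hm by rewrite Hf /Hm mulmxA.
pose b i j := B (inord i) (inord j).
pose l i j := L (inord i) (inord j).
pose h i j := Hm (inord i) (inord j).
pose t i j := T (inord i) (inord j).
have sumI (F : 'I_N.+1 -> R) : \sum_(m < N.+1) F m = \sum_(0 <= m < N.+1) F (inord m).
  by rewrite big_mkord; apply: eq_bigr => m _; rewrite inord_val.
have TH : thyps N l h t.
  split.
  - by move=> i j iN jN; rewrite /t -[in LHS]Tsym mxE.
  - by move=> i j iN jN ij; rewrite /t Ttri // !inordK.
  - by move=> i m iN mN im; rewrite /l Lu // !inordK.
  - by move=> i iN; rewrite /l Ld.
  - move=> i j iN jN; rewrite /h mxE sumI; apply: eq_bigr => q _; rewrite mxE //.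
have HH : hyps N a b l h.
  split.
  - by move=> i j _ _; rewrite /b Bent; exact: maxabs_ge.
  - by move=> i j _ _; rewrite /b !Bent -[in LHS]Asym mxE.
  - by move=> i iN; exact: Ld.
  - move=> i i0 iN; rewrite /l L1; last exact: inordK.
    by rewrite (_ : \val (inord i) = i) ?(gtn_eqF i0) //; exact: inordK.
  - by move=> i m _ _; exact: Lab.
  - by move=> m j jm mN jN; exact: (thess TH).
  - move=> i j iN jN; rewrite /b HB mxE sumI.
    rewrite (@sum_window _ _ _ 0 i.+1) //.
    by move=> q /andP[iq qN]; have := lup TH iN qN iq; rewrite /l => ->; rewrite mul0r.
have N0 : (0 < N)%N by lia.
have tb := tbound HH TH N0.
have tnn := tNN HH TH N0.
have Tent i j : T i j = t i j by rewrite /t !inord_val.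
have hNN1 : `|h N N.-1| <= 2 ^+ N.-1 * a by apply: (hbound HH N0 (leqnn N) (leq_pred N)).
have hNN : `|h N N| <= 2 ^+ N.-1 * a by apply: (hbound HH N0 (leqnn N) (leqnn N)).
have e2 : (2:R) ^+ N = 2 ^+ N.-1 * 2 by rewrite -(prednK N0) exprSr.
have lt2 : 2 ^+ N.-1 * a < 2 ^+ N * a by rewrite e2; have := exprn_gt0 N.-1 (ltr0n R 2); nra.
have allle i j : `|T i j| <= 2 ^+ N * a.
  rewrite Tent; case: (boolP ((val i == N) && (val j == N))) => [/andP[/eqP -> /eqP ->]| ne].
  - apply: le_trans tnn _; rewrite e2; lra.
  - apply: le_trans (tb _ _ _ _ ne) _; [exact: (ltn_ord i) | exact: (ltn_ord j) | exact: ltW].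
split.
- rewrite /growth ler_pdivrMr //=; apply: maxabs_le => //.
  by rewrite mulr_ge0 ?exprn_ge0 // ltW.
- move=> n6; have N5 : (5 <= N)%N by [].
  have st := strict HH apos N5.
  have tNNs : `|t N N| < 2 ^+ N * a by apply: le_lt_trans tnn _; rewrite e2; lra.
  split.
  + by move=> i /= ei; rewrite Tent ei.
  + rewrite /growth ltr_pdivrMr //=; apply: maxabs_lt; first by rewrite mulr_gt0 // exprn_gt0.
    move=> i j; rewrite Tent; case: (boolP ((val i == N) && (val j == N))) => [/andP[/eqP -> /eqP ->]| ne] //.
    by apply: le_lt_trans (tb _ _ (ltn_ord i) (ltn_ord j) ne) _.
Qed.
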